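(* Let $d\ge0$ and $n>d$ be integers, let $T\in L(n,d)$, let $T_1\in T$, and let $T'=T\setminus\{T_1\}$. Then $\mathcal{I}_{n,d}(\{T_1\})\times\mathcal{I}_{n,d}(T')$ and $\mathcal{I}_{n,d}(T)$ are isomorphic as posets.
   Context: For a finite set $X$ let $\operatorname{codim}_d(X)=d+1-|X|$. For a finite collection $\{T_1,\dots,T_l\}$ of pairwise distinct finite sets put $\rho_d(\{T_1,\dots,T_l\})=\sum_{i=1}^l\operatorname{codim}_d(T_i)$ (with $\rho_d(\emptyset)=0$) and $D_d(\{T_1,\dots,T_l\})=\operatorname{codim}_d(T_1\cap\cdots\cap T_l)-\rho_d(\{T_1,\dots,T_l\})$. For integers $d\ge0$, $n>d$, $L(n,d)$ is the set of all collections $T$ of subsets of $\{1,\dots,n\}$ such that (i) $D_d(T')>0$ for every $T'\subset T$ with $|T'|>1$, and (ii) $0\le|T_i|\le d$ for every $T_i\in T$. It is partially ordered by: $T<T'$ iff $\rho_d(T)<\rho_d(T')$ and for every $T_i\in T$ there exists $T'_j\in T'$ with $T'_j\subset T_i$; $T\le T'$ means $T<T'$ or $T=T'$. For $T\in L(n,d)$, $\mathcal{I}_{n,d}(T)=\{S\in L(n,d): S\le T\}$ with the induced order; products of posets carry the componentwise order. *)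

(* Defs.v *)
From HB Require Import structures.
From mathcomp Require Import all_boot all_order all_algebra.
Unset Printing Implicit Defensive.
Import GRing.Theory Num.Theory.
Local Open Scope ring_scope.

(* Ground set {1,...,n} is modelled by 'I_n = {0,...,n-1}. *)

Definition codim (d : nat) {n : nat} (X : {set 'I_n}) : int :=
  (d.+1)%:Z - (#|X|)%:Z.

Definition rho (d : nat) {n : nat} (T : {set {set 'I_n}}) : int :=
  \sum_(X in T) codim d X.

Definition Dd (d : nat) {n : nat} (T : {set {set 'I_n}}) : int :=
  codim d (\bigcap_(X in T) X) - rho d T.

Definition inL (n d : nat) (T : {set {set 'I_n}}) : bool :=
  [forall T' : {set {set 'I_n}},
     ((T' \subset T) && (1 < #|T'|)%N) ==> (0 < Dd d T')]
  && [forall X in T, (#|X| <= d)%N].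

Definition ltL (d : nat) {n : nat} (T T' : {set {set 'I_n}}) : bool :=
  (rho d T < rho d T') &&
  [forall X in T, exists Y in T', Y \subset X].

Definition leL (d : nat) {n : nat} (T T' : {set {set 'I_n}}) : bool :=
  ltL d T T' || (T == T').

Definition Iset (n d : nat) (T : {set {set 'I_n}}) : {set {set {set 'I_n}}} :=
  [set S | inL n d S && leL d S T].

Definition poset_iso {aT bT : finType} (A : {set aT}) (leA : rel aT)
    (B : {set bT}) (leB : rel bT) : Prop :=
  exists (f : aT -> bT) (g : bT -> aT),
    [/\ {in A, forall x, f x \in B},
        {in B, forall y, g y \in A},
        {in A, cancel f g},
        {in B, cancel g f} &
        {in A &, forall x y, leA x y = leB (f x) (f y)}].

Definition prod_rel {aT bT : Type} (r1 : rel aT) (r2 : rel bT) : rel (aT * bT) :=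
  fun p q => r1 p.1 q.1 && r2 p.2 q.2.

(* Main.v *)
Require Import Defs.
From mathcomp Require Import all_boot all_order all_algebra.
From mathcomp Require Import zify.
Import Order.TTheory GRing.Theory Num.Theory.
Local Open Scope ring_scope.

Section Aux.
Variables (n d : nat).
Local Notation sT := {set 'I_n}.
Local Notation cT := {set {set 'I_n}}.
Local Notation c := (@codim d n).

Lemma inL_sub {T S : cT} : inL n d T -> S \subset T -> inL n d S.
Proof.
case/andP=> /forallP h1 /forall_inP h2 sST; apply/andP; split.
  apply/forallP=> T'; apply/implyP=> /andP[sT' h]; have := h1 T'.
  by rewrite (subset_trans sT' sST) h.
by apply/forall_inP=> X XS; apply: h2; apply: (subsetP sST).
Qed.

Lemma inL_size {T : cT} {X : sT} : inL n d T -> X \in T -> (#|X| <= d)%N.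
Proof. by case/andP=> _ /forall_inP; apply. Qed.

Lemma inL_D {T S : cT} : inL n d T -> S \subset T -> (1 < #|S|)%N -> 0 < Dd d S.
Proof. by case/andP=> /forallP h _ sST hS; have := h S; rewrite sST hS. Qed.

Lemma uniq_sub {T : cT} {X Y Y' : sT} : inL n d T -> Y \in T -> Y' \in T ->
  Y \subset X -> Y' \subset X -> (#|X| <= d)%N -> Y = Y'.
Proof.
move=> LT YT Y'T sY sY' hX; apply/eqP/negPn/negP=> neq.
have hs : [set Y; Y'] \subset T by apply/subsetP=> Z; rewrite !inE => /orP[]/eqP->.
have := inL_D LT hs; rewrite cards2 neq => /(_ isT).
have E1 : rho d [set Y; Y'] = c Y + c Y' by rewrite /rho big_setU1 ?inE // big_set1.
have E2 : \bigcap_(Z in [set Y; Y']) Z = Y :&: Y' by rewrite big_setU1 ?inE // big_set1.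
rewrite /Dd E1 E2 /codim.
have := cardsUI Y Y'.
have : (#|Y :|: Y'| <= #|X|)%N by apply: subset_leq_card; rewrite subUset sY sY'.
lia.
Qed.

Lemma rho_le_cap {F : cT} : inL n d F -> F != set0 ->
  rho d F <= c (\bigcap_(X in F) X) /\
  ((1 < #|F|)%N -> rho d F < c (\bigcap_(X in F) X)).
Proof.
move=> LF F0.
have hD : (1 < #|F|)%N -> rho d F < c (\bigcap_(X in F) X).
  by move=> h; have := inL_D LF (subxx F) h; rewrite /Dd subr_gt0.
split=> //; case: (ltnP 1 #|F|) => h; first exact/ltW/hD.
have : #|F| == 1%N.
  have : (0 < #|F|)%N by rewrite card_gt0.
  lia.
by case/cards1P => X ->; rewrite /rho !big_set1.
Qed.

Lemma rho_part {K S : cT} :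
  (forall X, X \in S -> exists2 Y, Y \in K & Y \subset X) ->
  (forall X Y Y', X \in S -> Y \in K -> Y' \in K -> Y \subset X -> Y' \subset X -> Y = Y') ->
  rho d S = \sum_(Y in K) rho d [set X in S | Y \subset X].
Proof.
move=> hex hu.
transitivity (\sum_(Y in K) \sum_(X in S | Y \subset X) c X); last first.
  by apply: eq_bigr => Y _; rewrite /rho; apply: eq_bigl => X; rewrite inE.
rewrite (exchange_big_dep (fun X => X \in S)) /=; last by move=> Y X _ /andP[].
rewrite /rho; apply: eq_bigr => X XS; case: (hex X XS) => Y0 Y0K sY0.
rewrite (big_pred1 Y0) // => Y /=; rewrite XS /=; apply/idP/eqP.
  by case/andP=> YK sY; exact: hu XS YK Y0K sY sY0.
by move=> ->; rewrite Y0K sY0.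
Qed.

Definition cov (S R : cT) := forall X, X \in S -> exists2 Y, Y \in R & Y \subset X.

Lemma fiber_le {S T : cT} {Y : sT} : inL n d S -> inL n d T -> Y \in T ->
  rho d [set X in S | Y \subset X] <= c Y /\
  (rho d [set X in S | Y \subset X] = c Y -> [set X in S | Y \subset X] = [set Y]).
Proof.
move=> LS LT YT; set F := [set X in S | Y \subset X].
have LF : inL n d F by apply: (inL_sub LS); apply/subsetP=> X; rewrite inE => /andP[].
have cY : 0 < c Y by have := inL_size LT YT; rewrite /codim; lia.
case: (set_0Vmem F) => [F0 | [X0 XF]].
  rewrite F0 /rho big_set0; split; first exact: ltW.
  by move=> e; move: cY; rewrite -e ltxx.
have F0 : F != set0 by apply/set0Pn; exists X0.
have [h1 h2] := rho_le_cap LF F0.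
have hc : c (\bigcap_(X in F) X) <= c Y.
  have : (#|Y| <= #|\bigcap_(X in F) X|)%N.
    by apply: subset_leq_card; apply/bigcapsP => X; rewrite inE => /andP[].
  rewrite /codim; lia.
split; first exact: le_trans h1 hc.
move=> e; case: (ltnP 1 #|F|) => h.
  by have := lt_le_trans (h2 h) hc; rewrite e ltxx.
have : #|F| == 1%N.
  have : (0 < #|F|)%N by rewrite card_gt0.
  lia.
case/cards1P => X FX; rewrite FX; congr [set _].
have : X \in F by rewrite FX inE.
rewrite inE => /andP[XS sYX].
move: e; rewrite FX /rho big_set1 /codim => e.
apply/esym/eqP; rewrite eqEcard sYX /=; move: e; set a := #|X|; set b := #|Y|. lia.
Qed.

Lemma leL_char {S T : cT} : inL n d S -> inL n d T -> leL d S T <-> cov S T.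
Proof.
move=> LS LT; split.
  case/orP=> [/andP[_ /forall_inP h] | /eqP->].
    by move=> X XS; have /exists_inP[Y YT sY] := h X XS; exists Y.
  by move=> X XT; exists X.
move=> hcov.
have hu : forall X Y Y', X \in S -> Y \in T -> Y' \in T -> Y \subset X -> Y' \subset X -> Y = Y'.
  by move=> X Y Y' XS YT Y'T sY sY'; apply: (uniq_sub LT YT Y'T sY sY'); apply: inL_size LS XS.
have [->|neq] := eqVneq S T; first by rewrite /leL eqxx orbT.
apply/orP; left; apply/andP; split; last first.
  by apply/forall_inP => X XS; have [Y YT sY] := hcov X XS; apply/exists_inP; exists Y.
have [Y0 Y0T hY0] : exists2 Y0, Y0 \in T & [set X in S | Y0 \subset X] != [set Y0].
  move: neq; rewrite eqEsubset negb_and => /orP[/subsetPn[X XS XnT] | /subsetPn[Y YT YnS]].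
    case: (hcov X XS) => Y YT sY; exists Y => //; apply/negP => /eqP e.
    have : X \in [set X in S | Y \subset X] by rewrite inE XS sY.
    by rewrite e inE => /eqP XY; rewrite XY YT in XnT.
  exists Y => //; apply/negP => /eqP e.
  have : Y \in [set Y] by rewrite inE.
  by rewrite -e inE (negbTE YnS).
rewrite (rho_part hcov hu).
have -> : rho d T = \sum_(Y in T) c Y by [].
rewrite (bigD1 Y0 Y0T) (bigD1 Y0 Y0T) /=.
apply: ltr_leD.
  have [h1 h2] := fiber_le LS LT Y0T.
  rewrite lt_neqAle h1 andbT; apply/negP => /eqP e.
  by move: hY0; rewrite (h2 e) eqxx.
by apply: ler_sum => Y /andP[YT _]; case: (fiber_le LS LT YT).
Qed.

Lemma card_bigcup_le (K : cT) (G : sT -> sT) :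
  (#|\bigcup_(Y in K) G Y| <= \sum_(Y in K) #|G Y|)%N.
Proof.
apply: (@big_ind2 _ _ (fun (A : sT) (m : nat) => (#|A| <= m)%N)) => //.
  by rewrite cards0.
by move=> A a B b hA hB; apply: leq_trans (leq_card_setU A B).1 (leq_add hA hB).
Qed.

Lemma mono {K : cT} {W : sT -> sT} : (forall Y, Y \in K -> Y \subset W Y) ->
  Dd d K <= c (\bigcap_(Y in K) W Y) - \sum_(Y in K) c (W Y).
Proof.
move=> hW.
have sub : \bigcap_(Y in K) Y \subset \bigcap_(Y in K) W Y.
  by apply/bigcapsP => Y YK; apply: subset_trans (hW Y YK); exact: bigcap_inf.
have e1 := cardsID (\bigcap_(Y in K) Y) (\bigcap_(Y in K) W Y).
rewrite (setIidPr sub) in e1.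
have e2 : (#|\bigcap_(Y in K) W Y :\: \bigcap_(Y in K) Y| <= \sum_(Y in K) #|W Y :\: Y|)%N.
  apply: leq_trans (card_bigcup_le K (fun Y => W Y :\: Y)).
  apply: subset_leq_card; apply/subsetP => x; rewrite inE => /andP[xnK xW].
  apply/negPn/negP => hn; move/negP: xnK; apply; apply/bigcapP => Y YK.
  apply/negPn/negP => xnY; move/negP: hn; apply; apply/bigcupP; exists Y => //.
  by rewrite inE xnY; move/bigcapP: xW; apply.
have e3 : (\sum_(Y in K) #|W Y :\: Y| + \sum_(Y in K) #|Y| = \sum_(Y in K) #|W Y|)%N.
  rewrite -big_split; apply: eq_bigr => Y YK /=.
  by rewrite -[in RHS](cardsID Y (W Y)) (setIidPr (hW Y YK)) addnC.
have eA : \sum_(Y in K) (#|Y| : int) = ((\sum_(Y in K) #|Y|)%N : int).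
  by rewrite (big_morph Posz PoszD (erefl _)).
have eB : \sum_(Y in K) (#|W Y| : int) = ((\sum_(Y in K) #|W Y|)%N : int).
  by rewrite (big_morph Posz PoszD (erefl _)).
rewrite /Dd /rho /codim !sumrB eA eB.
move: e1 e2 e3.
set a := #|\bigcap_(Y in K) Y|; set b := #|\bigcap_(Y in K) W Y|.
set s1 := (\sum_(Y in K) #|Y|)%N; set s2 := (\sum_(Y in K) #|W Y|)%N.
set s3 := (\sum_(Y in K) #|W Y :\: Y|)%N.
set k := \sum_(Y in K) _.
lia.
Qed.

Lemma union_L {T U : cT} : inL n d T -> (forall X, X \in U -> (#|X| <= d)%N) ->
  cov U T -> (forall Y, Y \in T -> inL n d [set X in U | Y \subset X]) -> inL n d U.
Proof.
move=> LT hsz hcov hF.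
apply/andP; split; last by apply/forall_inP.
apply/forallP => V; apply/implyP => /andP[sVU hV].
pose F (Y : sT) : cT := [set X in V | Y \subset X].
pose W (Y : sT) : sT := \bigcap_(X in F Y) X.
set K := [set Y in T | F Y != set0].
have KT : K \subset T by apply/subsetP => Y; rewrite inE => /andP[].
have covV : cov V K.
  move=> X XV; have [Y YT sY] := hcov X (subsetP sVU X XV); exists Y => //.
  by rewrite inE YT; apply/set0Pn; exists X; rewrite inE XV sY.
have hu : forall X Y Y', X \in V -> Y \in K -> Y' \in K -> Y \subset X -> Y' \subset X -> Y = Y'.
  move=> X Y Y' XV YK Y'K sY sY'.
  apply: (uniq_sub LT (subsetP KT _ YK) (subsetP KT _ Y'K) sY sY').
  exact: hsz (subsetP sVU X XV).
have LF : forall Y, Y \in K -> inL n d (F Y).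
  move=> Y YK; apply: (inL_sub (hF Y (subsetP KT _ YK))); apply/subsetP => X.
  by rewrite !inE => /andP[XV ->]; rewrite (subsetP sVU X XV).
have FK : forall Y, Y \in K -> F Y != set0 by move=> Y; rewrite inE => /andP[].
have hY : forall Y, Y \in K -> Y \subset W Y.
  by move=> Y _; apply/bigcapsP => X; rewrite inE => /andP[].
have hm := mono hY.
have hcap : c (\bigcap_(Y in K) W Y) <= c (\bigcap_(X in V) X).
  have : (#|\bigcap_(X in V) X| <= #|\bigcap_(Y in K) W Y|)%N.
    apply: subset_leq_card; apply/bigcapsP => Y YK; apply/bigcapsP => X.
    by rewrite inE => /andP[XV _]; exact: bigcap_inf.
  rewrite /codim; set a := #|_|; set b := #|_|; lia.
have erho : rho d V = \sum_(Y in K) rho d (F Y) := rho_part covV hu.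
have hle : forall Y, Y \in K -> rho d (F Y) <= c (W Y).
  by move=> Y YK; case: (rho_le_cap (LF Y YK) (FK Y YK)).
have key : Dd d K + \sum_(Y in K) (c (W Y) - rho d (F Y)) <= Dd d V.
  have -> : Dd d V = c (\bigcap_(X in V) X) - rho d V by [].
  rewrite erho sumrB; move: hm hcap.
  set x1 := Dd d K; set x2 := c _; set x3 := c _; set x4 := \sum_(Y in K) c (W Y).
  set x5 := \sum_(Y in K) _; lia.
case: (ltnP 1 #|K|) => hK.
  have h1 := inL_D LT KT hK.
  have h0 : 0 <= \sum_(Y in K) (c (W Y) - rho d (F Y)).
    by apply: sumr_ge0 => Y YK; rewrite subr_ge0; exact: hle.
  by apply: lt_le_trans key; rewrite -[0](addr0 0); apply: ltr_leD.
have [X0 X0V] : exists X0, X0 \in V.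
  by apply/set0Pn; rewrite -card_gt0; apply: ltn_trans hV.
have [Y0 Y0K _] := covV X0 X0V.
have : #|K| == 1%N.
  have : (0 < #|K|)%N by rewrite card_gt0; apply/set0Pn; exists Y0.
  lia.
case/cards1P => Y1 KY1.
have Y01 : Y0 = Y1 by move: Y0K; rewrite KY1 inE => /eqP.
have FV : F Y1 = V.
  apply/setP => X; rewrite inE; apply/andP/idP => [[] // | XV]; split => //.
  have [Y YK sY] := covV X XV.
  by move: YK; rewrite KY1 inE => /eqP <-.
have Y1K : Y1 \in K by rewrite KY1 inE.
have [_ h2] := rho_le_cap (LF Y1 Y1K) (FK Y1 Y1K).
have h3 : rho d (F Y1) < c (W Y1) by apply: h2; rewrite FV.
move: key; rewrite KY1 big_set1.
have -> : Dd d [set Y1] = 0 by rewrite /Dd /rho !big_set1 subrr.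
rewrite add0r => key; apply: lt_le_trans key; by rewrite subr_gt0.
Qed.

Lemma main_sec (T : cT) (T1 : sT) : inL n d T -> T1 \in T ->
  poset_iso
    (setX (Iset n d [set T1]) (Iset n d (T :\ T1)))
    (prod_rel (leL d) (leL d))
    (Iset n d T) (leL d).
Proof.
move=> LT T1T.
have L1 : inL n d [set T1] by apply: (inL_sub LT); rewrite sub1set.
have L2 : inL n d (T :\ T1) by apply: (inL_sub LT); apply: subsetDl.
have hA : forall S, S \in Iset n d [set T1] ->
    inL n d S /\ (forall X, X \in S -> T1 \subset X).
  move=> S; rewrite inE => /andP[LS /(leL_char LS L1) hc]; split => // X XS.
  by have [Y] := hc X XS; rewrite inE => /eqP ->.
have hB : forall S, S \in Iset n d (T :\ T1) -> inL n d S /\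
    (forall X, X \in S -> (exists2 Y, Y \in T :\ T1 & Y \subset X) /\ ~~ (T1 \subset X)).
  move=> S; rewrite inE => /andP[LS /(leL_char LS L2) hc]; split => // X XS.
  have [Y YT sY] := hc X XS; split; first by exists Y.
  move: YT; rewrite !inE => /andP[YnT1 YinT].
  apply/negP => sT1; move/negP: YnT1; apply; apply/eqP.
  exact: (uniq_sub LT YinT T1T sY sT1 (inL_size LS XS)).
have hU : forall S1 S2, S1 \in Iset n d [set T1] -> S2 \in Iset n d (T :\ T1) ->
    inL n d (S1 :|: S2) /\ cov (S1 :|: S2) T.
  move=> S1 S2 SA SB; have [LS1 h1] := hA _ SA; have [LS2 h2] := hB _ SB.
  have cU : cov (S1 :|: S2) T.
    move=> X; rewrite inE => /orP[XS|XS]; first by exists T1 => //; apply: h1.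
    have [[Y YT sY] _] := h2 X XS; exists Y => //.
    by move: YT; rewrite inE => /andP[_ ->].
  split => //; apply: (union_L LT) => //.
    by move=> X; rewrite inE => /orP[XS|XS]; [apply: (inL_size LS1) | apply: (inL_size LS2)].
  move=> Y YT; have [->|neq] := eqVneq Y T1.
    apply: (inL_sub LS1); apply/subsetP => X; rewrite !inE => /andP[/orP[//|XS] sX].
    by have [_] := h2 X XS; rewrite sX.
  apply: (inL_sub LS2); apply/subsetP => X; rewrite !inE => /andP[/orP[XS|//] sX].
  exfalso; move/negP: neq; apply; apply/eqP; apply: (uniq_sub LT YT T1T sX (h1 X XS)).
  exact: (inL_size LS1 XS).
exists (fun p : cT * cT => p.1 :|: p.2).
exists (fun S : cT => ([set X in S | T1 \subset X], [set X in S | ~~ (T1 \subset X)])).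
split.
- move=> [S1 S2]; rewrite in_setX /= => /andP[SA SB].
  have [LU cU] := hU _ _ SA SB.
  by rewrite inE LU /=; apply/(leL_char LU LT).
- move=> S; rewrite inE => /andP[LS /(leL_char LS LT) hc].
  have LA : inL n d [set X in S | T1 \subset X].
    by apply: (inL_sub LS); apply/subsetP => X; rewrite inE => /andP[].
  have LB : inL n d [set X in S | ~~ (T1 \subset X)].
    by apply: (inL_sub LS); apply/subsetP => X; rewrite inE => /andP[].
  rewrite in_setX /=; apply/andP; split; rewrite inE.
    rewrite LA /=; apply/(leL_char LA L1) => X; rewrite inE => /andP[_ sX].
    by exists T1; rewrite ?inE.
  rewrite LB /=; apply/(leL_char LB L2) => X; rewrite inE => /andP[XS nsX].
  have [Y YT sY] := hc X XS; exists Y => //.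
  rewrite !inE YT andbT; apply/eqP => e; move: nsX; by rewrite -e sY.
- move=> [S1 S2]; rewrite in_setX /= => /andP[SA SB].
  have [_ h1] := hA _ SA; have [_ h2] := hB _ SB.
  congr pair; apply/setP => X; rewrite !inE.
    case XS1: (X \in S1) => /=; first by rewrite h1.
    by case XS2: (X \in S2) => //=; have [_ /negbTE ->] := h2 X XS2.
  case XS1: (X \in S1) => /=.
    rewrite h1 //=; apply/esym/negP => XS2; have [_ /negP] := h2 X XS2; apply.
    exact: h1.
  by case XS2: (X \in S2) => //=; have [_ ->] := h2 X XS2.
- move=> S _; apply/setP => X; rewrite !inE.
  by case: (X \in S); case: (T1 \subset X).
move=> [S1 S2] [R1 R2]; rewrite !in_setX /= => /andP[SA SB] /andP[RA RB].
rewrite /prod_rel /=.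
have [LS1 h1] := hA _ SA; have [LS2 h2] := hB _ SB.
have [LR1 hr1] := hA _ RA; have [LR2 hr2] := hB _ RB.
have [LSU _] := hU _ _ SA SB; have [LRU _] := hU _ _ RA RB.
apply/idP/idP.
  case/andP => /(leL_char LS1 LR1) c1 /(leL_char LS2 LR2) c2.
  apply/(leL_char LSU LRU) => X; rewrite inE => /orP[XS|XS].
    by have [Y YR sY] := c1 X XS; exists Y; rewrite ?inE ?YR.
  by have [Y YR sY] := c2 X XS; exists Y; rewrite ?inE ?YR ?orbT.
move/(leL_char LSU LRU) => cU; apply/andP; split.
  apply/(leL_char LS1 LR1) => X XS.
  have XU : X \in S1 :|: S2 by rewrite inE XS.
  have [Y] := cU X XU; rewrite inE => /orP[YR1|YR2] sY; first by exists Y.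
  have [[Z ZT' sZ] _] := hr2 Y YR2.
  move: ZT'; rewrite !inE => /andP[ZnT1 ZT]; exfalso; move/negP: ZnT1; apply; apply/eqP.
  apply: (uniq_sub LT ZT T1T (subset_trans sZ sY) (h1 X XS)).
  exact: (inL_size LS1 XS).
apply/(leL_char LS2 LR2) => X XS.
have XU : X \in S1 :|: S2 by rewrite inE XS orbT.
have [Y] := cU X XU; rewrite inE => /orP[YR1|YR2] sY; last by exists Y.
have [_ /negP] := h2 X XS; case.
exact: subset_trans (hr1 Y YR1) sY.
Qed.
End Aux.

Theorem lemma3p6 (d n : nat) (hn : (d < n)%N) (T : {set {set 'I_n}})
    (T1 : {set 'I_n}) :
  inL n d T -> T1 \in T ->
  poset_iso
    (setX (Iset n d [set T1]) (Iset n d (T :\ T1)))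
    (prod_rel (leL d) (leL d))
    (Iset n d T) (leL d).
Proof. exact: main_sec. Qed.
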